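(* Let $k\ge1$ and $K>0$. There is a constant $C$ (depending only on $k$ and $K$) such that for all $n$ and all $B,B'\in M_n(\mathbb C)^{\mathbb N}$ with $B_0=uv^*$, $B'_0=u'v'^*$ for some vectors $u,v,u',v'\in\mathbb C^n$ and $\|B_t\|,\|B'_t\|\le K$ for $0\le t\le k-1$, $$|\Sigma_k(B,B')-\hat\Sigma_k(B,B')|\le Cn^{-1}\quad\text{and}\quad|\Sigma'_k(B,B')-\hat\Sigma'_k(B,B')|\le Cn^{-1}.$$
   Context: Let $\rho\in[0,1]$. $\|\cdot\|$ is the operator norm. $P_k$ is the set of $\pi=(j_1,i_1,\dots,j_k,i_k)\in\{1,\dots,n\}^{2k}$ with convention $i_0=i_k$; $M_\pi(B)=n^{-(k-1)/2}\prod_{t=0}^{k-1}(B_t)_{i_tj_{t+1}}$; $Q_k\subset P_k$ is the set of $\pi$ such that the pairs $(j_t,i_t)$, $1\le t\le k$, are pairwise distinct. $\Sigma_k(B,B')=n^{-k+1}\prod_{t=0}^{k-1}\operatorname{Tr}(B_tB_t'^* )$, $\Sigma'_k(B,B')=\rho^kn^{-k+1}\prod_{t=0}^{k-1}\operatorname{Tr}(B_tB_t'^\intercal)$, $\hat\Sigma_k(B,B')=\sum_{\pi\in Q_k}M_\pi(B)\overline{M_\pi(B')}$, $\hat\Sigma'_k(B,B')=\rho^k\sum_{\pi\in Q_k}M_\pi(B)M_\pi(B')$. *)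

(* Defs.v *)
From HB Require Import structures.
From mathcomp Require Import all_boot all_order all_algebra.
From mathcomp Require Import complex.
From mathcomp Require Import reals.
Set Implicit Arguments. Unset Strict Implicit. Unset Printing Implicit Defensive.
Import Order.TTheory GRing.Theory Num.Theory.
Local Open Scope ring_scope.

Section Defs.
Variable R : rcfType.
Local Notation C := R[i].
Local Notation normc := ComplexField.Normc.normc.

Definition adjmx m p (A : 'M[C]_(m, p)) : 'M[C]_(p, m) := (map_mx Num.conj A)^T.

Definition vnorm n (x : 'cV[C]_n) : R := Num.sqrt (\sum_i normc (x i 0) ^+ 2).

Definition opnorm_le n (A : 'M[C]_n) (K : R) : Prop :=
  forall x : 'cV[C]_n, vnorm (A *m x) <= K * vnorm x.

(* An element pi = (j_1,i_1,...,j_k,i_k) of P_k is encoded as p : 'I_k -> 'I_n * 'I_n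
   with p t = (j_{t+1}, i_{t+1}) for t = 0..k-1.  With the convention i_0 = i_k,
   i_t = (p (ord_pred t)).2 and j_{t+1} = (p t).1 for t : 'I_k. *)
Definition Pk k n := {ffun 'I_k -> 'I_n * 'I_n}.

Definition inQk k n (p : Pk k n) : bool := injectiveb p.

Definition Mpi k n (p : Pk k n) (B : nat -> 'M[C]_n) : C :=
  real_complex R ((Num.sqrt (n%:R : R)) ^- (k.-1)) *
  \prod_(t < k) B t (p (ord_pred t)).2 (p t).1.

Definition Sigma k n (B B' : nat -> 'M[C]_n) : C :=
  ((n%:R : C) ^- (k.-1)) * \prod_(t < k) \tr (B t *m adjmx (B' t)).

Definition Sigma' (rho : R) k n (B B' : nat -> 'M[C]_n) : C :=
  real_complex R (rho ^+ k) * ((n%:R : C) ^- (k.-1)) * \prod_(t < k) \tr (B t *m (B' t)^T).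

Definition hSigma k n (B B' : nat -> 'M[C]_n) : C :=
  \sum_(p : Pk k n | inQk p) Mpi p B * Num.conj (Mpi p B').

Definition hSigma' (rho : R) k n (B B' : nat -> 'M[C]_n) : C :=
  real_complex R (rho ^+ k) * \sum_(p : Pk k n | inQk p) Mpi p B * Mpi p B'.

End Defs.

(* Main.v *)
Require Import Defs.
From HB Require Import structures.
From mathcomp Require Import all_boot all_order all_algebra.
From mathcomp Require Import complex.
From mathcomp Require Import reals.
From mathcomp Require Import ring lra.
Import Order.TTheory GRing.Theory Num.Theory.
Notation normc := ComplexField.Normc.normc.
Local Open Scope ring_scope.

Lemma sum_cyc (T : comPzRingType) k n (f : 'I_k -> 'I_n -> 'I_n -> T) :
  \sum_(p : Pk k n) \prod_(t < k) f t (p (ord_pred t)).2 (p t).1 =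
  \prod_(t < k) \sum_a \sum_b f t a b.
Proof.
under [RHS]eq_bigr do rewrite pair_bigA.
rewrite bigA_distr_bigA /=.
pose Phi (p : Pk k n) : Pk k n := [ffun t => ((p (ord_pred t)).2, (p t).1)].
pose Psi (q : Pk k n) : Pk k n := [ffun t => ((q t).2, (q (ordS t)).1)].
symmetry; rewrite (reindex Phi) /=.
  by apply: eq_bigr => p _; apply: eq_bigr => t _; rewrite ffunE.
exists Psi => p _; apply/ffunP => t; rewrite !ffunE ?ordSK ?ord_predK; by case: (p t).
Qed.

Lemma sum_delta (T : pzRingType) (I : finType) (y : I) (F : I -> T) :
  \sum_b F b * (b == y)%:R = F y.
Proof.
rewrite (bigD1 y) //= eqxx mulr1 big1 ?addr0 // => b /negPf ->; exact: mulr0.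
Qed.

Lemma sum_eq2 (T : pzRingType) (I : finType) (a c : I) :
  \sum_y (a == y)%:R * (c == y)%:R = (a == c)%:R :> T.
Proof.
rewrite (bigD1 a) //= eqxx mul1r big1 ?addr0 1?eq_sym // => b /negPf.
by rewrite eq_sym => ->; rewrite mul0r.
Qed.

Lemma prod_if1 (T : comPzRingType) k (s : 'I_k) (F : 'I_k -> T) :
  \prod_r (if r == s then F r else 1) = F s.
Proof.
rewrite (bigD1 s) //= eqxx big1 ?mulr1 // => r /negPf ->; done.
Qed.

Lemma constr_sum (T : comPzRingType) k n (h : 'I_k -> 'I_n -> 'I_n -> T) (s t : 'I_k) :
  s != t ->
  \sum_(p : Pk k n | (p s).1 == (p t).1) \prod_r h r (p (ord_pred r)).2 (p r).1 =
  \sum_y ((\sum_a h s a y) * (\sum_a h t a y) *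
     \prod_(r | (r != s) && (r != t)) \sum_a \sum_b h r a b).
Proof.
move=> st.
pose g y r a b := h r a b * (if r == s then (b == y)%:R else 1)
                          * (if r == t then (b == y)%:R else 1).
transitivity (\sum_y \sum_(p : Pk k n) \prod_r g y r (p (ord_pred r)).2 (p r).1).
  rewrite exchange_big big_mkcond /=; apply: eq_bigr => p _.
  under [RHS]eq_bigr do rewrite /g !big_split /=.
  under [RHS]eq_bigr => i _ do rewrite (@prod_if1 _ _ s (fun r => ((p r).1 == i)%:R)) (@prod_if1 _ _ t (fun r => ((p r).1 == i)%:R)) -mulrA.
  rewrite -mulr_sumr sum_eq2.
  by case: eqP => _; rewrite ?mulr1 ?mulr0.
apply: eq_bigr => y _; rewrite sum_cyc.
rewrite (bigD1 s) //= (bigD1 t) /=; last by rewrite eq_sym st.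
rewrite mulrA; congr (_ * _ * _).
- apply: eq_bigr => a _; rewrite -[RHS](@sum_delta _ _ y (fun b => h s a b)).
  by apply: eq_bigr => b _; rewrite /g eqxx (negbTE st) mulr1.
- apply: eq_bigr => a _; rewrite -[RHS](@sum_delta _ _ y (fun b => h t a b)).
  have ts : t != s by rewrite eq_sym.
  by apply: eq_bigr => b _; rewrite /g eqxx (negbTE ts) mulr1.
- apply: eq_bigr => r /andP[rs rt]; apply: eq_bigr => a _; apply: eq_bigr => b _.
  by rewrite /g (negbTE rs) (negbTE rt) !mulr1.
Qed.
Lemma noninj_ex k n (p : Pk k n) : ~~ inQk p ->
  exists s t, (t != s) && ((p s).1 == (p t).1).
Proof.
move=> H.
suff /existsP[s /existsP[t Hst]] : [exists s, exists t, (t != s) && ((p s).1 == (p t).1)].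
  by exists s, t.
move: H; apply: contraR => /existsPn H.
apply/injectiveP => s t E; apply/eqP; rewrite eq_sym.
move: (H s) => /existsPn /(_ t); rewrite E eqxx andbT negbK; done.
Qed.

Lemma le_term (R : realFieldType) (I : finType) (i : I) (F : I -> R) :
  (forall j, 0 <= F j) -> F i <= \sum_j F j.
Proof.
move=> F0; rewrite (bigD1 i) //= lerDl; exact: sumr_ge0.
Qed.

Lemma union_bound (R : realFieldType) k n (X : Pk k n -> R) :
  (forall p, 0 <= X p) ->
  \sum_(p : Pk k n | ~~ inQk p) X p <=
  \sum_(s < k) \sum_(t < k | t != s) \sum_(p : Pk k n | (p s).1 == (p t).1) X p.
Proof.
move=> X0.
have -> : \sum_(s < k) \sum_(t < k | t != s) \sum_(p : Pk k n | (p s).1 == (p t).1) X p =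
  \sum_(p : Pk k n) \sum_(s < k) \sum_(t < k) (if (t != s) && ((p s).1 == (p t).1) then X p else 0).
  rewrite exchange_big /=; apply: eq_bigr => s _.
  rewrite exchange_big /= big_mkcond /=; apply: eq_bigr => t _.
  case: (t != s); first by rewrite big_mkcond.
  by rewrite big1.
rewrite [leLHS]big_mkcond /=; apply: ler_sum => p _.
case: ifPn => H; last first.
  by apply: sumr_ge0 => s _; apply: sumr_ge0 => t _; case: ifP => //; case: ifP.
have [s [t /andP[ts E]]] := @noninj_ex k n p H.
have F0 : forall s' t', 0 <= (if (t' != s') && ((p s').1 == (p t').1) then X p else 0).
  by move=> s' t'; case: ifP.
apply: le_trans (@le_term _ _ s (fun s' => \sum_(t' < k) (if (t' != s') && ((p s').1 == (p t').1) then X p else 0)) _); last first.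
  by move=> j; apply: sumr_ge0.
apply: le_trans (@le_term _ _ t _ _); last by [].
by rewrite ts E.
Qed.

Lemma prod_beta (R : comPzRingType) k n (L : R) :
  \prod_(r < k.+1) (if nat_of_ord r == 0%N then L else n%:R * L) = L ^+ k.+1 * n%:R ^+ k.
Proof.
rewrite big_ord_recl /=.
under eq_bigr => i _ do rewrite /bump /=.
rewrite prodr_const card_ord.
by rewrite exprMn exprS -mulrA [n%:R ^+ _ * _]mulrC.
Qed.

Lemma comb_bound (R : realFieldType) k n (h : 'I_k -> 'I_n -> 'I_n -> R) (L : R) :
  (0 < k)%N -> 0 <= L ->
  (forall r a b, 0 <= h r a b) ->
  (forall r b, \sum_a h r a b <= L) ->
  (forall r : 'I_k, nat_of_ord r = 0%N -> \sum_a \sum_b h r a b <= L) ->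
  n%:R * \sum_(p : Pk k n | ~~ inQk p) \prod_r h r (p (ord_pred r)).2 (p r).1
    <= (k * k)%:R * (L ^+ k * n%:R ^+ k.-1).
Proof.
move: h; case: k => [|k] h k0 L0 h0 hc h00; first by [].
pose beta := fun r : 'I_k.+1 => if nat_of_ord r == 0%N then L else n%:R * L.
have beta0 : forall r, 0 <= beta r.
  by move=> r; rewrite /beta; case: eqP => // _; rewrite mulr_ge0.
have Sb : forall r, \sum_a \sum_b h r a b <= beta r.
  move=> r; rewrite /beta; case: eqP => [/h00 //|_].
  rewrite exchange_big /=; apply: le_trans (ler_sum _ (fun b _ => hc r b)) _.
  by rewrite sumr_const card_ord mulr_natl.
have S0 : forall r, 0 <= \sum_a \sum_b h r a b.
  by move=> r; apply: sumr_ge0 => a _; apply: sumr_ge0.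
have c0 : forall r b, 0 <= \sum_a h r a b by move=> r b; apply: sumr_ge0.
have n0 : 0 <= n%:R :> R by [].
have prodb : \prod_r beta r = L ^+ k.+1 * n%:R ^+ k.
  by rewrite /beta prod_beta.
have pairb : forall s t : 'I_k.+1, s != t ->
    n%:R * \sum_(p : Pk k.+1 n | (p s).1 == (p t).1) \prod_r h r (p (ord_pred r)).2 (p r).1
    <= \prod_r beta r.
  move=> s t st; rewrite constr_sum // -mulr_suml mulrA.
  rewrite [in X in _ <= X](bigD1 s) //= [in X in _ <= X](bigD1 t) /=; last by rewrite eq_sym st.
  rewrite mulrA; apply: ler_pM.
  - by rewrite mulr_ge0 // sumr_ge0 // => y _; rewrite mulr_ge0.
  - by apply: prodr_ge0 => r _.
  - set A := \sum_y _.
    have A0 : 0 <= A by rewrite sumr_ge0 // => y _; rewrite mulr_ge0.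
    have As : A <= (\sum_a \sum_b h s a b) * L.
      rewrite exchange_big /= mulr_suml; apply: ler_sum => y _.
      by apply: ler_wpM2l.
    have At : A <= (\sum_a \sum_b h t a b) * L.
      rewrite exchange_big /= mulr_suml; apply: ler_sum => y _.
      by rewrite mulrC; apply: ler_wpM2l.
    have Ss := Sb s; have St := Sb t.
    move: Ss St; rewrite /beta.
    case: eqP => [s00|s0]; case: eqP => [t00|t0] => Ss St.
    + by case/eqP: st; apply: val_inj; rewrite /= s00 t00.
    + apply: le_trans (ler_wpM2l n0 As) _.
      rewrite [L * _]mulrC mulrA; apply: ler_wpM2r => //; by apply: ler_wpM2l.
    + apply: le_trans (ler_wpM2l n0 At) _.
      rewrite mulrA; apply: ler_wpM2r => //; by apply: ler_wpM2l.
    + apply: le_trans (ler_wpM2l n0 As) _.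
      apply: le_trans (ler_wpM2l n0 (ler_wpM2r L0 Ss)) _.
      by rewrite le_eqVlt; apply/orP; left; apply/eqP; ring.
  - by apply: ler_prod => r _; rewrite S0 Sb.
have UB := @union_bound R k.+1 n (fun p : Pk k.+1 n => \prod_r h r (p (ord_pred r)).2 (p r).1)
  (fun p => prodr_ge0 _ (fun r _ => h0 _ _ _)).
apply: le_trans (ler_wpM2l n0 UB) _.
rewrite /= -prodb mulr_sumr.
apply: le_trans (_ : _ <= \sum_(s < k.+1) \sum_(t < k.+1) \prod_r beta r) _.
  apply: ler_sum => s _.
  rewrite mulr_sumr [leLHS]big_mkcond /=; apply: ler_sum => t _.
  case: ifPn => ts; first by apply: pairb; rewrite eq_sym.
  by apply: prodr_ge0.
by rewrite !sumr_const !card_ord -mulrnA mulr_natl.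
Qed.
Section A.
Local Open Scope complex_scope.
Variable R : rcfType.
Implicit Types x y : R[i].

Lemma normcE x : `|x| = (normc x)%:C.
Proof. by []. Qed.

Lemma normc_ge0 x : 0 <= normc x.
Proof. by case: x => a b; rewrite /= sqrtr_ge0. Qed.

Lemma normc_conj x : normc (Num.conj x) = normc x.
Proof. by apply: complexI; rewrite -!normcE norm_conjC. Qed.

Lemma normc_real (r : R) : normc (r%:C) = `|r|.
Proof. by rewrite /= expr0n /= addr0 sqrtr_sqr. Qed.

Lemma conj_real (s : R) : Num.conj (s%:C) = s%:C.
Proof. exact: conjc_real. Qed.

Lemma mul_conj x : Num.conj x * x = ((normc x) ^+ 2)%:C.
Proof. by rewrite -normCKC normcE rmorphXn. Qed.

Lemma normc_sum (I : finType) (P : pred I) (F : I -> R[i]) :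
  normc (\sum_(i | P i) F i) <= \sum_(i | P i) normc (F i).
Proof.
elim/big_rec2: _ => [|i y1 y2 _ IH]; first by rewrite normc_real normr0.
apply: le_trans (le_normcD _ _) _; by rewrite lerD2l.
Qed.

Lemma normc_prod (I : finType) (P : pred I) (F : I -> R[i]) :
  normc (\prod_(i | P i) F i) = \prod_(i | P i) normc (F i).
Proof.
elim/big_rec2: _ => [|i y1 y2 _ IH]; first by rewrite normc_real normr1.
by rewrite ComplexField.Normc.normcM IH.
Qed.

Lemma vnorm_sq n (w : 'cV[R[i]]_n) : vnorm w ^+ 2 = \sum_i normc (w i 0) ^+ 2.
Proof. by rewrite /vnorm sqr_sqrtr // sumr_ge0 // => i _; rewrite sqr_ge0. Qed.

Lemma colsum n (A : 'M[R[i]]_n) (K : R) : 0 <= K -> opnorm_le A K ->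
  forall b, \sum_a normc (A a b) ^+ 2 <= K ^+ 2.
Proof.
move=> K0 HA b.
have := HA (delta_mx b 0).
rewrite -colE.
have -> : vnorm (delta_mx b 0 : 'cV[R[i]]_n) = 1.
  rewrite /vnorm (bigD1 b) //= mxE eqxx /= expr1n expr0n addr0 sqrtr1 expr1n big1 ?addr0 ?sqrtr1 //.
  by move=> i /negPf ib; rewrite mxE ib /= expr0n addr0 sqrtr0 expr0n.
rewrite mulr1 => H.
have v0 : 0 <= vnorm (col b A) by rewrite sqrtr_ge0.
have : vnorm (col b A) ^+ 2 <= K ^+ 2 by nra.
by rewrite vnorm_sq; under eq_bigr do rewrite mxE.
Qed.

Lemma rank1 n (u v : 'cV[R[i]]_n) (K : R) : 0 <= K -> opnorm_le (u *m adjmx v) K ->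
  \sum_a \sum_b normc ((u *m adjmx v) a b) ^+ 2 <= K ^+ 2.
Proof.
move=> K0 HA.
set U := \sum_a normc (u a 0) ^+ 2.
set N := \sum_b normc (v b 0) ^+ 2.
have U0 : 0 <= U by rewrite sumr_ge0 // => i _; rewrite sqr_ge0.
have N0 : 0 <= N by rewrite sumr_ge0 // => i _; rewrite sqr_ge0.
have -> : \sum_a \sum_b normc ((u *m adjmx v) a b) ^+ 2 = U * N.
  rewrite /U mulr_suml; apply: eq_bigr => a _; rewrite mulr_sumr; apply: eq_bigr => b _.
  by rewrite !mxE big_ord1 !mxE ComplexField.Normc.normcM normc_conj exprMn.
have H := HA v.
have E : u *m adjmx v *m v = u *m (N%:C)%:M.
  rewrite -mulmxA; congr (_ *m _); apply/matrixP => i j.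
  rewrite !ord1 !mxE eqxx mulr1n /N rmorph_sum; apply: eq_bigr => b _.
  by rewrite !mxE mul_conj.
move: H; rewrite E mul_mx_scalar.
have -> : vnorm (N%:C *: u) = Num.sqrt (U * N ^+ 2).
  rewrite /vnorm /U mulr_suml; congr (Num.sqrt _); apply: eq_bigr => a _.
  by rewrite mxE ComplexField.Normc.normcM normc_real ger0_norm // mulrC exprMn.
move=> H.
have s0 : 0 <= Num.sqrt (U * N ^+ 2) by rewrite sqrtr_ge0.
have H2 : U * N ^+ 2 <= K ^+ 2 * N.
  have e1 : Num.sqrt (U * N ^+ 2) ^+ 2 = U * N ^+ 2.
    by rewrite sqr_sqrtr // mulr_ge0 // sqr_ge0.
  have e2 : vnorm v ^+ 2 = N by rewrite vnorm_sq.
  have v0 : 0 <= vnorm v by rewrite sqrtr_ge0.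
  have := ler_pM s0 s0 H H.
  by rewrite -!expr2 e1 exprMn e2.
have [->|Np] := eqVneq N 0; first by rewrite mulr0 sqr_ge0.
have Npos : 0 < N by rewrite lt_def Np N0.
nra.
Qed.

Lemma gen k n (f : 'I_k -> 'I_n -> 'I_n -> R[i]) (x : R) : 0 <= x ->
  normc (x%:C * \prod_(t < k) \sum_a \sum_b f t a b -
         \sum_(p : Pk k n | inQk p) x%:C * \prod_(t < k) f t (p (ord_pred t)).2 (p t).1)
  <= x * \sum_(p : Pk k n | ~~ inQk p) \prod_(t < k) normc (f t (p (ord_pred t)).2 (p t).1).
Proof.
move=> x0.
rewrite -sum_cyc mulr_sumr (bigID (fun p : Pk k n => inQk p)) /= addrC addrK.
apply: le_trans (normc_sum _ _ _) _.
rewrite mulr_sumr; apply: ler_sum => p _.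
by rewrite ComplexField.Normc.normcM normc_real ger0_norm // normc_prod.
Qed.
End A.

Theorem lemma6p4 (R : realType) (k : nat) (K : R) :
  (1 <= k)%N -> 0 < K ->
  exists C : R, forall (rho : R), 0 <= rho <= 1 ->
  forall (n : nat) (B B' : nat -> 'M[R[i]]_n) (u v u' v' : 'cV[R[i]]_n),
    B 0%N = u *m adjmx v -> B' 0%N = u' *m adjmx v' ->
    (forall t : nat, (t <= k.-1)%N -> opnorm_le (B t) K /\ opnorm_le (B' t) K) ->
    normc (Sigma k B B' - hSigma k B B') <= C / n%:R /\
    normc (Sigma' rho k B B' - hSigma' rho k B B') <= C / n%:R.
Proof.
move=> k1 K0.
exists ((k * k)%:R * (K ^+ 2) ^+ k).
move=> rho /andP[rho0 rho1] n B B' u v u' v' HB HB' Hop.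
pose h := fun (t : 'I_k) (a b : 'I_n) => (normc (B t a b) ^+ 2 + normc (B' t a b) ^+ 2) / 2.
have hop : forall t : 'I_k, opnorm_le (B t) K /\ opnorm_le (B' t) K.
  by move=> t; apply: Hop; rewrite -ltnS prednK // ltn_ord.
have h0 : forall t a b, 0 <= h t a b.
  by move=> t a b; rewrite /h divr_ge0 // addr_ge0 // sqr_ge0.
have K2 : 0 <= K ^+ 2 by rewrite sqr_ge0.
have hc : forall t b, \sum_a h t a b <= K ^+ 2.
  move=> t b; rewrite /h -mulr_suml big_split /=.
  have [H1 H2] := hop t.
  have := colsum _ _ _ _ (ltW K0) H1 b; have := colsum _ _ _ _ (ltW K0) H2 b; lra.
have h00 : forall t : 'I_k, nat_of_ord t = 0%N -> \sum_a \sum_b h t a b <= K ^+ 2.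
  move=> t t0; rewrite /h t0 HB HB'.
  have [H1 H2] := Hop 0%N (leq0n _); rewrite HB in H1; rewrite HB' in H2.
  under eq_bigr do rewrite -mulr_suml big_split /=.
  rewrite -mulr_suml big_split /=.
  have := rank1 _ _ _ _ _ (ltW K0) H1; have := rank1 _ _ _ _ _ (ltW K0) H2; lra.
have CB := @comb_bound _ _ _ h _ k1 K2 h0 hc h00.
set S := \sum_(p | ~~ inQk p) _ in CB.
set x := (n%:R : R) ^- k.-1.
have x0 : 0 <= x by rewrite /x invr_ge0 exprn_ge0.
have fin : forall y, y <= x * S -> y <= (k * k)%:R * (K ^+ 2) ^+ k / n%:R.
  move=> y Hy; apply: le_trans Hy _.
  have [n0|npos] := posnP n.
    have -> : S = 0.
      rewrite /S big1 // => p _; exfalso.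
      move: (p (Ordinal k1)).1; rewrite n0 => -[m]; by rewrite ltn0.
    by rewrite n0 mulr0 invr0 mulr0.
  have nR : 0 < n%:R :> R by rewrite ltr0n.
  rewrite ler_pdivlMr // -mulrA [S * _]mulrC.
  apply: le_trans (ler_wpM2l x0 CB) _.
  rewrite /x mulrC -!mulrA mulfV ?mulr1 //.
  by rewrite expf_neq0 // gt_eqF.
have key : forall f : 'I_k -> 'I_n -> 'I_n -> R[i],
    (forall t a b, normc (f t a b) <= h t a b) ->
    normc ((x%:C)%C * \prod_(t < k) \sum_a \sum_b f t a b -
         \sum_(p : Pk k n | inQk p) (x%:C)%C * \prod_(t < k) f t (p (ord_pred t)).2 (p t).1)
    <= (k * k)%:R * (K ^+ 2) ^+ k / n%:R.
  move=> f Hf; apply: fin; apply: le_trans (@gen _ _ _ _ _ x0) _.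
  apply: ler_wpM2l => //; apply: ler_sum => p _; apply: ler_prod => t _.
  by rewrite normc_ge0 Hf.
have amgm : forall (z w : R[i]), normc z * normc w <= (normc z ^+ 2 + normc w ^+ 2) / 2.
  move=> z w; have := sqr_ge0 (normc z - normc w); rewrite sqrrB; lra.
have xs : forall p (D D' : nat -> 'M[R[i]]_n), Mpi p D * Num.conj (Mpi p D') =
   (x%:C)%C * \prod_(t < k) (D t (p (ord_pred t)).2 (p t).1 * Num.conj (D' t (p (ord_pred t)).2 (p t).1)).
  move=> p D D'; rewrite /Mpi rmorphM rmorph_prod /= conj_real mulrACA -rmorphM -big_split /=.
  congr (_%:C%C * _); rewrite /x -invfM -exprMn -expr2 sqr_sqrtr //.
split.
- have -> : Sigma k B B' - hSigma k B B' =
     (x%:C)%C * \prod_(t < k) \sum_a \sum_b (B t a b * Num.conj (B' t a b)) -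
     \sum_(p : Pk k n | inQk p) (x%:C)%C * \prod_(t < k) (B t (p (ord_pred t)).2 (p t).1 * Num.conj (B' t (p (ord_pred t)).2 (p t).1)).
    congr (_ - _).
      rewrite /Sigma /x fmorphV rmorphXn rmorph_nat; congr (_ * _).
      apply: eq_bigr => t _; rewrite /mxtrace; apply: eq_bigr => a _; rewrite mxE.
      by apply: eq_bigr => b _; rewrite !mxE.
    by rewrite /hSigma; apply: eq_bigr => p _; rewrite xs.
  apply: key => t a b; rewrite ComplexField.Normc.normcM normc_conj; exact: amgm.
- have xs' : forall p (D D' : nat -> 'M[R[i]]_n), Mpi p D * Mpi p D' =
     (x%:C)%C * \prod_(t < k) (D t (p (ord_pred t)).2 (p t).1 * D' t (p (ord_pred t)).2 (p t).1).
    move=> p D D'; rewrite /Mpi mulrACA -rmorphM -big_split /=.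
    congr (_%:C%C * _); rewrite /x -invfM -exprMn -expr2 sqr_sqrtr //.
  have -> : Sigma' rho k B B' - hSigma' rho k B B' = ((rho ^+ k)%:C)%C *
     ((x%:C)%C * \prod_(t < k) \sum_a \sum_b (B t a b * B' t a b) -
     \sum_(p : Pk k n | inQk p) (x%:C)%C * \prod_(t < k) (B t (p (ord_pred t)).2 (p t).1 * B' t (p (ord_pred t)).2 (p t).1)).
    rewrite /Sigma' /hSigma' -mulrA -mulrBr; congr (_ * (_ - _)).
      rewrite /x fmorphV rmorphXn rmorph_nat; congr (_ * _).
      apply: eq_bigr => t _; rewrite /mxtrace; apply: eq_bigr => a _; rewrite mxE.
      by apply: eq_bigr => b _; rewrite !mxE.
    by apply: eq_bigr => p _; rewrite xs'.
  rewrite ComplexField.Normc.normcM normc_real ger0_norm ?exprn_ge0 //.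
  apply: le_trans (ler_wpM2r (normc_ge0 _ _) (_ : rho ^+ k <= 1)) _; first by rewrite exprn_ile1.
  rewrite mul1r; apply: key => t a b; rewrite ComplexField.Normc.normcM; exact: amgm.
Qed.
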